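(* Let $Y$ be an $\mathrm{OA}(N,k,2,t)$ with symbols from $\{-1,1\}$ and strength $t\ge 1$, and let $X$ be an $N\times k$ array with entries in $\{-1,1\}$. Then $X$ is OD-equivalent to $Y$ if and only if there exists $g\in G(k)^{\rm OD}$ such that the multiset of rows of $X$ equals the multiset of rows of $g(Y)$. Moreover, if $X$ is OD-equivalent to $Y$, then $X$ is an $\mathrm{OA}(N,k,2,2\lfloor t/2\rfloor)$.
   Context: An $\mathrm{OA}(N,k,s,t)$ with $t\in\{0,\dots,k\}$ is an $N\times k$ array over an $s$-element symbol set such that in every $N\times t$ subarray each of the $s^t$ possible $t$-tuples appears exactly $N/s^t$ times as a row. Two $N\times k$ arrays $Y_1,Y_2$ over $\{-1,1\}$ are Hadamard equivalent if $Y_2$ is obtained from $Y_1$ by a sequence of signed permutations (permutations possibly followed by sign changes) of rows or columns, i.e. $Y_2=P_1D_1Y_1D_2P_2$ for permutation matrices $P_1,P_2$ and diagonal $\pm1$ matrices $D_1,D_2$. $X_1,X_2$ are OD-equivalent if $[\mathbf{1},X_1]$ and $[\mathbf{1},X_2]$ are Hadamard equivalent. $G(k)^{\rm OD}$ is the group of permutations of $\{-1,1\}^k$ generated by coordinate permutations, sign changes of single coordinates, and $R_i(z_1,\dots,z_k)=(z_1z_i,\dots,z_{i-1}z_i,z_i,z_{i+1}z_i,\dots,z_kz_i)$ for $i=1,\dots,k$; it acts on arrays row by row. *)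

(* Defs.v *)
From mathcomp Require Import all_boot all_algebra all_fingroup.
Set Implicit Arguments. Unset Strict Implicit. Unset Printing Implicit Defensive.
Import GRing.Theory.
Local Open Scope ring_scope.

Definition pm1 (x : int) : bool := (x == 1) || (x == -1).
Definition pm1mx (m n : nat) (A : 'M[int]_(m, n)) : bool :=
  [forall i, forall j, pm1 (A i j)].

Definition had_equiv (m n : nat) (A B : 'M[int]_(m, n)) : Prop :=
  exists (s1 : 'S_m) (s2 : 'S_n) (d1 : 'rV[int]_m) (d2 : 'rV[int]_n),
    [/\ pm1mx d1, pm1mx d2 &
        B = perm_mx s1 *m diag_mx d1 *m A *m diag_mx d2 *m perm_mx s2].

Definition od_equiv (N k : nat) (X1 X2 : 'M[int]_(N, k)) : Prop :=
  had_equiv (row_mx (const_mx 1 : 'M[int]_(N, 1)) X1)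
            (row_mx (const_mx 1 : 'M[int]_(N, 1)) X2).

Definition isOA2 (N k t : nat) (Y : 'M[int]_(N, k)) : Prop :=
  [/\ pm1mx Y, (t <= k)%N &
      forall c : 'I_t -> 'I_k, injective c ->
      forall v : 'I_t -> int, (forall j, pm1 (v j)) ->
        (#|[set i : 'I_N | [forall j, Y i (c j) == v j]]| * 2 ^ t)%N = N].

(* Points of {-1,1}^k encoded as {ffun 'I_k -> bool}: b encodes (-1)^b. *)
Definition sgnb (b : bool) : int := (-1) ^+ b.
Definition toPt (k : nat) (r : 'rV[int]_k) : {ffun 'I_k -> bool} :=
  [ffun j => r 0 j == -1].

Definition cperm_fun (k : nat) (s : 'S_k) (z : {ffun 'I_k -> bool})
  : {ffun 'I_k -> bool} := [ffun j => z (s j)].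
Lemma cperm_inj (k : nat) (s : 'S_k) : injective (cperm_fun s).
Proof.
move=> z w /ffunP H; apply/ffunP => j; have := H ((s^-1)%g j).
by rewrite !ffunE permKV.
Qed.
Definition cperm (k : nat) (s : 'S_k) : {perm {ffun 'I_k -> bool}} :=
  perm (@cperm_inj k s).

Definition flip_fun (k : nat) (i : 'I_k) (z : {ffun 'I_k -> bool})
  : {ffun 'I_k -> bool} := [ffun j => if j == i then ~~ z j else z j].
Lemma flip_inj (k : nat) (i : 'I_k) : injective (flip_fun i).
Proof.
apply: (can_inj (g := flip_fun i)) => z; apply/ffunP => j.
by rewrite !ffunE; case: eqP => // _; rewrite negbK.
Qed.
Definition flip (k : nat) (i : 'I_k) : {perm {ffun 'I_k -> bool}} :=
  perm (@flip_inj k i).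

(* generator 3: R_i (z_1..z_k) = (z_1 z_i, .., z_i, .., z_k z_i);
   products of signs correspond to xor of bits *)
Definition R_fun (k : nat) (i : 'I_k) (z : {ffun 'I_k -> bool})
  : {ffun 'I_k -> bool} := [ffun j => if j == i then z i else z j (+) z i].
Lemma R_inj (k : nat) (i : 'I_k) : injective (R_fun i).
Proof.
apply: (can_inj (g := R_fun i)) => z; apply/ffunP => j.
rewrite !ffunE eqxx; case: eqP => [->//|_].
by rewrite addbK.
Qed.
Definition Rperm (k : nat) (i : 'I_k) : {perm {ffun 'I_k -> bool}} :=
  perm (@R_inj k i).

Definition GOD_gens (k : nat) : {set {perm {ffun 'I_k -> bool}}} :=
  [set cperm s | s : 'S_k] :|: [set flip i | i : 'I_k] :|: [set Rperm i | i : 'I_k].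

Definition GOD (k : nat) : {set {perm {ffun 'I_k -> bool}}} := <<GOD_gens k>>%g.

Definition actOD (N k : nat) (g : {perm {ffun 'I_k -> bool}}) (Y : 'M[int]_(N, k))
  : 'M[int]_(N, k) := \matrix_(i, j) sgnb (g (toPt (row i Y)) j).

Definition rows (m n : nat) (A : 'M[int]_(m, n)) : seq 'rV[int]_n :=
  [seq row i A | i <- enum 'I_m].

(* Main.v *)
Require Import Defs.
From mathcomp Require Import all_boot all_algebra all_fingroup zify.
Set Implicit Arguments. Unset Strict Implicit. Unset Printing Implicit Defensive.
Import GRing.Theory.
Local Open Scope ring_scope.

Lemma sgnbK (b : bool) : (sgnb b == -1) = b.
Proof. by case: b; rewrite /sgnb ?expr0 ?expr1 //. Qed.

Lemma pm1E (x : int) : pm1 x -> x = sgnb (x == -1).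
Proof. by case/orP => /eqP ->; rewrite /sgnb ?expr0 ?expr1. Qed.

Lemma sgnbD (a b : bool) : sgnb (a (+) b) = sgnb a * sgnb b.
Proof. by case: a; case: b; rewrite /sgnb /= ?expr0 ?expr1 ?mulr1 ?mul1r ?mulrNN ?mulr1. Qed.

Lemma sgnb_inj : injective sgnb.
Proof. by move=> a b H; rewrite -(sgnbK a) H sgnbK. Qed.

Lemma pm1_sgnb b : pm1 (sgnb b).
Proof. by case: b; rewrite /pm1 /sgnb ?expr0 ?expr1 eqxx ?orbT. Qed.

Lemma sgnb2 b : sgnb b * sgnb b = 1.
Proof. by rewrite -sgnbD addbb. Qed.

Lemma pm1mxP m n (A : 'M[int]_(m, n)) : reflect (forall i j, pm1 (A i j)) (pm1mx A).
Proof. by apply: (iffP forallP) => H i; [move=> j; exact: (forallP (H i))|apply/forallP]. Qed.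

Lemma pm1_mul x y : pm1 x -> pm1 y -> pm1 (x * y).
Proof. by case/orP=> /eqP->; case/orP=> /eqP->; rewrite /pm1 ?mulN1r ?mul1r ?opprK eqxx ?orbT. Qed.
Lemma pm1_sq x : pm1 x -> x * x = 1.
Proof. by case/orP=> /eqP->; rewrite ?mulN1r ?opprK ?mul1r. Qed.

Definition hE m n (A B : 'M[int]_(m, n)) : Prop :=
  exists (s : 'S_m) (p : 'S_n) (a : 'I_m -> int) (b : 'I_n -> int),
    [/\ forall i, pm1 (a i), forall j, pm1 (b j) &
        forall i j, B i j = a i * b j * A (s i) (p j)].

Lemma hadE m n (s1 : 'S_m) (s2 : 'S_n) d1 d2 (A : 'M[int]_(m, n)) i j :
  (perm_mx s1 *m diag_mx d1 *m A *m diag_mx d2 *m perm_mx s2) i j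
  = d1 0 (s1 i) * A (s1 i) (s2^-1%g j) * d2 0 (s2^-1%g j).
Proof.
have -> : perm_mx s2 = perm_mx (s2^-1)^-1 :> 'M[int]_n by rewrite invgK.
rewrite -col_permE mxE mul_mx_diag mxE -mulmxA -row_permE mxE mul_diag_mx mxE.
by [].
Qed.

Lemma had_hE m n (A B : 'M[int]_(m, n)) : had_equiv A B <-> hE A B.
Proof.
split.
  case=> s1 [s2] [d1] [d2] [/pm1mxP H1 /pm1mxP H2 ->].
  exists s1, s2^-1%g, (fun i => d1 0 (s1 i)), (fun j => d2 0 (s2^-1%g j)); split => //.
  by move=> i j; rewrite hadE mulrAC.
case=> s [p] [a] [b] [Ha Hb HB].
exists s, p^-1%g, (\row_r a (s^-1%g r)), (\row_l b (p^-1%g l)); split.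
- by apply/pm1mxP => i j; rewrite mxE.
- by apply/pm1mxP => i j; rewrite mxE.
apply/matrixP => i j; rewrite hadE HB !mxE invgK !permK mulrAC.
by [].
Qed.

Lemma hE_refl m n (A : 'M[int]_(m, n)) : hE A A.
Proof.
exists 1%g, 1%g, (fun _ => 1), (fun _ => 1); split => //.
by move=> i j; rewrite !perm1 !mul1r.
Qed.

Lemma hE_trans m n (A B C : 'M[int]_(m, n)) : hE A B -> hE B C -> hE A C.
Proof.
case=> s1 [p1] [a1] [b1] [Ha1 Hb1 H1].
case=> s2 [p2] [a2] [b2] [Ha2 Hb2 H2].
exists (s2 * s1)%g, (p2 * p1)%g, (fun i => a2 i * a1 (s2 i)), (fun j => b2 j * b1 (p2 j)).
split.
- by move=> i; apply: pm1_mul.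
- by move=> j; apply: pm1_mul.
move=> i j; rewrite H2 H1 !permM.
set x := A _ _; set u := a2 i; set v := a1 _; set w := b2 j; set z := b1 _.
by rewrite !mulrA; congr (_ * _); rewrite -!mulrA; congr (_ * _); rewrite mulrCA.
Qed.

Lemma hE_sym m n (A B : 'M[int]_(m, n)) : hE A B -> hE B A.
Proof.
case=> s [p] [a] [b] [Ha Hb H].
exists s^-1%g, p^-1%g, (fun i => a (s^-1%g i)), (fun j => b (p^-1%g j)); split => //.
move=> i j; rewrite H !permKV.
idtac.
by rewrite mulrA mulrACA (pm1_sq (Ha _)) (pm1_sq (Hb _)) !mul1r.
Qed.

Definition one1 N k (W : 'M[int]_(N, k)) := row_mx (const_mx 1 : 'M[int]_(N, 1)) W.

Lemma one1E N k (W : 'M[int]_(N, k)) i (l : 'I_k.+1) :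
  one1 W i l = if unlift ord0 l is Some j then W i j else 1.
Proof.
case: unliftP => [j ->|->].
  have -> : lift ord0 j = rshift 1 j by apply: val_inj.
  by rewrite /one1 row_mxEr.
have -> : (ord0 : 'I_k.+1) = lshift k (ord0 : 'I_1) by apply: val_inj.
by rewrite /one1 row_mxEl mxE.
Qed.

Lemma toPtE k (r : 'rV[int]_k) j : toPt r j = (r 0 j == -1).
Proof. by rewrite ffunE. Qed.

Lemma toPt_act N k g (W : 'M[int]_(N, k)) i :
  toPt (row i (actOD g W)) = g (toPt (row i W)).
Proof. by apply/ffunP => j; rewrite toPtE !mxE sgnbK. Qed.

Lemma actOD1 N k (W : 'M[int]_(N, k)) : pm1mx W -> actOD 1 W = W.
Proof.
move/pm1mxP => HW; apply/matrixP => i j.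
by rewrite mxE perm1 toPtE mxE -pm1E.
Qed.

Lemma actODM N k g h (W : 'M[int]_(N, k)) :
  actOD (g * h) W = actOD h (actOD g W).
Proof. by apply/matrixP => i j; rewrite !mxE toPt_act permM. Qed.

Lemma actOD_pm1 N k g (W : 'M[int]_(N, k)) : pm1mx (actOD g W).
Proof. by apply/pm1mxP => i j; rewrite mxE pm1_sgnb. Qed.

Lemma actOD_entry N k g (W : 'M[int]_(N, k)) i j :
  actOD g W i j = sgnb (g (toPt (row i W)) j).
Proof. by rewrite mxE. Qed.

Lemma Wsg N k (W : 'M[int]_(N, k)) i j : pm1mx W -> W i j = sgnb (toPt (row i W) j).
Proof. by move/pm1mxP => HW; rewrite toPtE mxE -pm1E. Qed.

Lemma hE_cperm N k (W : 'M[int]_(N, k)) s : pm1mx W ->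
  hE (one1 W) (one1 (actOD (cperm s) W)).
Proof.
move=> HW; exists 1%g, (lift_perm ord0 ord0 s), (fun _ => 1), (fun _ => 1); split => //.
move=> i l; rewrite perm1 !mul1r.
case: (unliftP ord0 l) => [j ->|->].
  rewrite lift_perm_lift !one1E !liftK actOD_entry permE ffunE.
  by rewrite (Wsg _ _ HW).
by rewrite lift_perm_id !one1E unlift_none.
Qed.

Lemma hE_flip N k (W : 'M[int]_(N, k)) c : pm1mx W ->
  hE (one1 W) (one1 (actOD (flip c) W)).
Proof.
move=> HW; exists 1%g, 1%g, (fun _ => 1),
  (fun l : 'I_k.+1 => if unlift ord0 l is Some j then sgnb (j == c) else 1); split => //.
- by move=> l; case: unlift => [j|]; rewrite ?pm1_sgnb.
move=> i l; rewrite !perm1 !mul1r.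
case: (unliftP ord0 l) => [j ->|->].
  rewrite !one1E !liftK actOD_entry permE ffunE (Wsg _ _ HW) -sgnbD.
  by case: (j == c).
by rewrite !one1E unlift_none mul1r.
Qed.

Lemma hE_R N k (W : 'M[int]_(N, k)) c : pm1mx W ->
  hE (one1 W) (one1 (actOD (Rperm c) W)).
Proof.
move=> HW; have HW' := pm1mxP _ HW.
exists 1%g, (tperm ord0 (lift ord0 c)), (fun i => W i c), (fun _ => 1); split => //.
move=> i l; rewrite !perm1 mulr1.
case: (unliftP ord0 l) => [j ->|->].
  rewrite one1E liftK actOD_entry permE ffunE.
  case: (eqVneq j c) => [->|ne].
    by rewrite tpermR one1E unlift_none mulr1 -Wsg.
  rewrite tpermD; last 2 first.
  - by rewrite neq_lift.
  - by apply: contra ne => /eqP /lift_inj ->.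
  by rewrite one1E liftK sgnbD -!Wsg // mulrC.
by rewrite tpermL !one1E liftK unlift_none pm1_sq.
Qed.

Lemma hE_gen N k (W : 'M[int]_(N, k)) h : h \in GOD_gens k -> pm1mx W ->
  hE (one1 W) (one1 (actOD h W)).
Proof.
case/setUP => [/setUP [] |] /imsetP [x _ ->].
- exact: hE_cperm.
- exact: hE_flip.
- exact: hE_R.
Qed.

Lemma GOD_ind k (P : {perm {ffun 'I_k -> bool}} -> Prop) :
  P 1%g -> (forall g h, P g -> h \in GOD_gens k -> P (g * h)%g) ->
  forall g, g \in GOD k -> P g.
Proof.
move=> P1 PM g /gen_prodgP [n [c Hc ->]].
elim: n c Hc => [|n IH] c Hc; first by rewrite big_ord0.
rewrite big_ord_recr /=; apply: PM => //.
exact: IH.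
Qed.

Lemma hE_GOD N k (W : 'M[int]_(N, k)) g : g \in GOD k -> pm1mx W ->
  hE (one1 W) (one1 (actOD g W)).
Proof.
move=> Hg; move: g Hg W; apply: GOD_ind => [W HW|g h IH Hh W HW].
  by rewrite actOD1 //; apply: hE_refl.
rewrite actODM; apply: hE_trans (IH W HW) _.
by apply: hE_gen => //; apply: actOD_pm1.
Qed.

Lemma perm_rows_row N k (X Z : 'M[int]_(N, k)) : perm_eq (rows X) (rows Z) ->
  exists s : 'S_N, forall i, row i X = row (s i) Z.
Proof.
have EX : rows X = [tuple row i X | i < N] by rewrite /rows /= enumT unlock.
have EZ : rows Z = [tuple row i Z | i < N] by rewrite /rows /= enumT unlock.
rewrite EX EZ => /tuple_permP [p Hp]; exists p => i.
have /(congr1 (fun t => tnth t i)) : [tuple row i X | i < N] = [tuple tnth [tuple row i Z | i < N] (p i) | i < N].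
  by apply: val_inj.
by rewrite !tnth_mktuple.
Qed.

Lemma hE_rows N k (X Z : 'M[int]_(N, k)) : perm_eq (rows X) (rows Z) ->
  hE (one1 Z) (one1 X).
Proof.
case/perm_rows_row => s Hs.
exists s, 1%g, (fun _ => 1), (fun _ => 1); split => // i l.
rewrite perm1 !mul1r !one1E; case: unlift => // j.
by have := congr1 (fun r : 'rV_k => r 0 j) (Hs i); rewrite !mxE.
Qed.

Lemma part1_back N k (X Y : 'M[int]_(N, k)) g : pm1mx Y -> g \in GOD k ->
  perm_eq (rows X) (rows (actOD g Y)) -> od_equiv X Y.
Proof.
move=> HY Hg Hp; apply/had_hE; apply: hE_sym.
exact: hE_trans (hE_GOD Hg HY) (hE_rows Hp).
Qed.

Definition GODfun k (F : {ffun 'I_k -> bool} -> {ffun 'I_k -> bool}) :=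
  exists2 g, g \in GOD k & forall z, g z = F z.

Lemma GODfun_ext k (F G : {ffun 'I_k -> bool} -> {ffun 'I_k -> bool}) :
  F =1 G -> GODfun F -> GODfun G.
Proof. by move=> E [g Hg Hz]; exists g => // z; rewrite Hz E. Qed.

Lemma GODfun_comp k (F G : {ffun 'I_k -> bool} -> {ffun 'I_k -> bool}) :
  GODfun F -> GODfun G -> GODfun (fun z => G (F z)).
Proof.
move=> [f Hf Ef] [g Hg Eg]; exists (f * g)%g; first exact: groupM.
by move=> z; rewrite permM Ef Eg.
Qed.

Lemma cperm_GOD k (s : 'S_k) : cperm s \in GOD k.
Proof. by apply/mem_gen/setUP; left; apply/setUP; left; apply: imset_f. Qed.
Lemma flip_GOD k (i : 'I_k) : flip i \in GOD k.
Proof. by apply/mem_gen/setUP; left; apply/setUP; right; apply: imset_f. Qed.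
Lemma R_GOD k (i : 'I_k) : Rperm i \in GOD k.
Proof. by apply/mem_gen/setUP; right; apply: imset_f. Qed.

Lemma GODfun_flipl k (l : seq 'I_k) : uniq l ->
  GODfun (fun z => [ffun j => (j \in l) (+) z j]).
Proof.
elim: l => [_|i l IH /= /andP [nil ul]].
  by exists 1%g; [exact: group1 | move=> z; apply/ffunP => j; rewrite perm1 ffunE].
apply: (GODfun_ext (F := fun z => flip i ([ffun j => (j \in l) (+) z j]))).
  move=> z; apply/ffunP => j; rewrite permE !ffunE in_cons.
  case: eqP => [->|_] //=; by rewrite (negbTE nil).
apply: GODfun_comp (IH ul) _.
by exists (flip i) => //; apply: flip_GOD.
Qed.

Lemma GODfun_cp k (tau : 'I_k -> 'I_k) (e : 'I_k -> bool) : injective tau ->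
  GODfun (fun z => [ffun j => e j (+) z (tau j)]).
Proof.
move=> Htau.
apply: (GODfun_ext (F := fun z => [ffun j => (j \in [seq j <- enum 'I_k | e j]) (+) (cperm (perm Htau) z) j])).
  by move=> z; apply/ffunP => j; rewrite !ffunE mem_filter mem_enum andbT !permE ffunE permE.
apply: (GODfun_comp (F := cperm (perm Htau)) (G := fun w => [ffun j => (j \in [seq j <- enum 'I_k | e j]) (+) w j])).
  by exists (cperm (perm Htau)) => //; apply: cperm_GOD.
apply: GODfun_flipl; apply: filter_uniq; apply: enum_uniq.
Qed.

Definition aB k (z : {ffun 'I_k -> bool}) (l : 'I_k.+1) :=
  if unlift ord0 l is Some j then z j else false.

Lemma lift0_neq k (p : 'S_k.+1) j : p (lift ord0 j) != p ord0.
Proof. by rewrite (inj_eq perm_inj) eq_sym neq_lift. Qed.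

Lemma GODfun_sp k (p : 'S_k.+1) (e : 'I_k -> bool) :
  GODfun (fun z => [ffun j => e j (+) (aB z (p ord0) (+) aB z (p (lift ord0 j)))]).
Proof.
case: (unliftP ord0 (p ord0)) => [c Hc | Hc].
  pose tau j := if unlift ord0 (p (lift ord0 j)) is Some l then l else c.
  have Htau : injective tau.
    move=> j1 j2; rewrite /tau.
    case: unliftP => [l1 E1|E1]; case: unliftP => [l2 E2|E2].
    - move=> El; move: E1; rewrite El -E2 => /perm_inj /lift_inj. done.
    - move=> El; have := lift0_neq p j1; by rewrite E1 El Hc eqxx.
    - move=> El; have := lift0_neq p j2; by rewrite E2 -El Hc eqxx.
    - by move=> _; have := etrans E1 (esym E2) => /perm_inj /lift_inj.
  apply: (GODfun_ext (F := fun z => [ffun j => e j (+) (Rperm c z) (tau j)])).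
    move=> z; apply/ffunP => j; rewrite !ffunE permE ffunE /tau /aB Hc liftK.
    case: unliftP => [l E|E].
      have -> : (l == c) = false.
        by apply/negbTE; apply: contraNneq (lift0_neq p j) => El; rewrite E El Hc.
      by rewrite (addbC (z l)).
    by rewrite eqxx addbF.
  apply: (GODfun_comp (F := Rperm c) (G := fun w => [ffun j => e j (+) w (tau j)])).
    by exists (Rperm c) => //; apply: R_GOD.
  exact: GODfun_cp.
pose tau j := if unlift ord0 (p (lift ord0 j)) is Some l then l else j.
have Hn j : unlift ord0 (p (lift ord0 j)) <> None.
  case: unliftP => // E _; have := lift0_neq p j; by rewrite E Hc eqxx.
have Htau : injective tau.
  move=> j1 j2; rewrite /tau.
  case: unliftP (Hn j1) => [l1 E1|E1] // _; case: unliftP (Hn j2) => [l2 E2|E2] // _.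
  by move=> El; move: E1; rewrite El -E2 => /perm_inj /lift_inj.
apply: (GODfun_ext (F := fun z => [ffun j => e j (+) z (tau j)])); last exact: GODfun_cp.
move=> z; apply/ffunP => j; rewrite !ffunE /tau /aB Hc unlift_none /=.
by case: unliftP (Hn j) => [l E|E].
Qed.

Definition pts N k (W : 'M[int]_(N, k)) := [seq toPt (row i W) | i <- enum 'I_N].
Definition fromPt k (z : {ffun 'I_k -> bool}) : 'rV[int]_k := \row_j sgnb (z j).

Lemma rows_pts N k (W : 'M[int]_(N, k)) : pm1mx W -> rows W = map (@fromPt k) (pts W).
Proof.
move=> HW; rewrite /rows /pts -map_comp; apply: eq_map => i /=.
by apply/rowP => j; rewrite !mxE toPtE mxE -pm1E //; apply: (pm1mxP _ HW).
Qed.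

Lemma pts_act N k g (W : 'M[int]_(N, k)) : pts (actOD g W) = map g (pts W).
Proof. by rewrite /pts -[RHS]map_comp; apply: eq_map => i /=; rewrite toPt_act. Qed.

Lemma one1_sg N k (X : 'M[int]_(N, k)) r l : pm1mx X ->
  one1 X r l = sgnb (aB (toPt (row r X)) l).
Proof. by move=> HX; rewrite one1E /aB; case: unlift => [j|]; rewrite ?(Wsg _ _ HX). Qed.

Lemma perm_enum_map N (T : eqType) (s : 'S_N) (f : 'I_N -> T) :
  perm_eq [seq f (s i) | i <- enum 'I_N] [seq f i | i <- enum 'I_N].
Proof.
have -> : [seq f (s i) | i <- enum 'I_N] = map f (map s (enum 'I_N)) by rewrite -[RHS]map_comp.
apply: perm_map; apply: uniq_perm.
- by rewrite (map_inj_uniq perm_inj) enum_uniq.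
- exact: enum_uniq.
move=> a; rewrite mem_enum; apply/mapP; exists (s^-1%g a); first by rewrite mem_enum.
by rewrite permKV.
Qed.

Lemma part1_fwd N k (X Y : 'M[int]_(N, k)) : pm1mx X -> pm1mx Y -> od_equiv X Y ->
  exists2 h, h \in GOD k & perm_eq (pts X) (map h (pts Y)).
Proof.
move=> HX HY /had_hE [s [p [a [b [Ha Hb H]]]]].
pose e j := (b ord0 == -1) (+) (b (lift ord0 j) == -1).
pose F := fun z => [ffun j => e j (+) (aB z (p ord0) (+) aB z (p (lift ord0 j)))].
have EF i : toPt (row i Y) = F (toPt (row (s i) X)).
  have H0 := H i ord0.
  rewrite one1E unlift_none one1_sg // (pm1E (Ha i)) (pm1E (Hb _)) -!sgnbD in H0.
  have {}H0 := sgnb_inj (etrans (expr0 (-1 : int)) H0 : sgnb false = _).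
  apply/ffunP => j; rewrite ffunE mxE /F ffunE /e.
  move: H0.
  have := H i (lift ord0 j); rewrite one1E liftK one1_sg // (pm1E (Ha i)) (pm1E (Hb _)) -!sgnbD.
  move=> -> H0; rewrite sgnbK; move: H0.
  move: (a i == -1) (b ord0 == -1) (b (lift ord0 j) == -1) => x y w.
  move: (aB _ (p ord0)) (aB _ (p (lift ord0 j))) => u v.
  by case: x; case: y; case: w; case: u; case: v.
have [g Hg Eg] := GODfun_sp p e.
exists g^-1%g; first by rewrite groupV.
have E1 : perm_eq (pts Y) (map g (pts X)).
  have -> : pts Y = [seq g (toPt (row (s i) X)) | i <- enum 'I_N].
    by apply: eq_map => i; rewrite EF Eg.
  apply: perm_trans (perm_enum_map s (fun i => g (toPt (row i X)))) _.
  by rewrite -[X in perm_eq _ X]map_comp.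
apply: (perm_trans (y := map g^-1%g (map g (pts X)))).
  by rewrite (mapK (permK g)) perm_refl.
by apply: perm_map; rewrite perm_sym.
Qed.

Section OAsec.
Local Open Scope nat_scope.
Variable k : nat.
Implicit Types (P : seq {ffun 'I_k -> bool}) (S T U : {set 'I_k}) (w z : {ffun 'I_k -> bool}).

Definition mt S w z := [forall j in S, z j == w j].
Definition OAS P m := forall S, #|S| <= m -> forall w, count (mt S w) P * 2 ^ #|S| = size P.
Definition flU U w : {ffun 'I_k -> bool} := [ffun x => (x \in U) (+) w x].

Lemma mt_ext S w w' z z' : (forall x, x \in S -> (z x == w x) = (z' x == w' x)) ->
  mt S w z = mt S w' z'.
Proof. by move=> H; apply: eq_forallb_in => x /= Hx; rewrite H. Qed.

Lemma count_split (T0 : Type) (a b : pred T0) s :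
  count a s = count (fun x => a x && b x) s + count (fun x => a x && ~~ b x) s.
Proof. by elim: s => //= x s ->; case: (a x); case: (b x) => /=; lia. Qed.

Lemma mtD1 S j w z : j \in S -> mt S w z = mt (S :\ j) w z && (z j == w j).
Proof.
move=> Hj; apply/idP/andP => [H | [H1 H2]].
  split; last exact: (forall_inP H j Hj).
  by apply/forall_inP => x /setD1P [_ Hx]; apply: (forall_inP H).
apply/forall_inP => x Hx; case: (eqVneq x j) => [->//|ne].
by apply: (forall_inP H1); rewrite !inE ne Hx.
Qed.

Lemma split_cnt T j w P : j \in T ->
  count (mt (T :\ j) w) P = count (mt T w) P + count (mt T (flip_fun j w)) P.
Proof.
move=> Hj; rewrite (count_split _ (fun z => z j == w j)); congr (_ + _).
  by apply: eq_count => z; rewrite (mtD1 _ _ Hj).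
apply: eq_count => z; rewrite (mtD1 _ _ Hj) ffunE eqxx.
rewrite (mt_ext (w' := w) (z' := z)); last first.
  by move=> x /setD1P [ne _]; rewrite ffunE (negbTE ne).
by case: (z j); case: (w j).
Qed.

Lemma ar c1 c2 s n: c1 * 2^s.+1 = n -> c2 * 2^s.+1 = n -> (c1 + c2) * 2^s = n.
Proof. rewrite expnS. lia. Qed.

Lemma OAS_exact P m : m <= k ->
  (forall S, #|S| = m -> forall w, count (mt S w) P * 2 ^ #|S| = size P) -> OAS P m.
Proof.
move=> Hmk HP S; move Hd: (m - #|S|) => d; elim: d S Hd => [|d IH] S Hd HS w.
  by apply: HP; lia.
have : 0 < #|~: S| by have := cardsC S; rewrite card_ord; lia.
case/card_gt0P => j; rewrite inE => Hj.
have HT : #|j |: S| = #|S|.+1 by rewrite cardsU1 Hj.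
have E := split_cnt w P (setU11 j S); rewrite setU1K // in E.
rewrite E; apply: ar; rewrite -HT; apply: IH; lia.
Qed.

Lemma OAS_mono P m m' : m' <= m -> OAS P m -> OAS P m'.
Proof. by move=> le H S HS; apply: H; lia. Qed.

Lemma OAS_perm P P' m : perm_eq P P' -> OAS P m -> OAS P' m.
Proof.
move=> Hp H S HS w; rewrite -(perm_size Hp) -(H S HS w).
by move/seq.permP: Hp => ->.
Qed.

End OAsec.

Section OAsec2.
Local Open Scope nat_scope.
Variable k : nat.
Implicit Types (P : seq {ffun 'I_k -> bool}) (S T U : {set 'I_k}) (w z : {ffun 'I_k -> bool}).

Lemma OAS_cperm P m s : OAS P m -> OAS (map (cperm s) P) m.
Proof.
move=> H S HS w; rewrite count_map size_map.
pose w' : {ffun 'I_k -> bool} := [ffun x => w ((s^-1)%g x)].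
have E : #|[set s x | x in S]| = #|S| by rewrite card_imset //; apply: perm_inj.
rewrite -E -(H [set s x | x in S] _ w'); last by rewrite E.
congr (_ * _); apply: eq_count => z /=.
apply/forall_inP/forall_inP => Hz x Hx.
  case/imsetP: Hx => y Hy ->; rewrite ffunE permK.
  by have := Hz y Hy; rewrite permE ffunE.
rewrite permE ffunE.
by have := Hz (s x) (imset_f _ Hx); rewrite ffunE permK.
Qed.

Lemma OAS_flip P m i : OAS P m -> OAS (map (flip i) P) m.
Proof.
move=> H S HS w; rewrite count_map size_map -(H S HS (flip_fun i w)).
congr (_ * _); apply: eq_count => z /=; apply: mt_ext => x _.
by rewrite permE !ffunE; case: (x == i); case: (z x); case: (w x).
Qed.

Lemma twoflip T K P i j : (forall j w, j \in T -> count (mt (T :\ j) w) P = K) ->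
  i \in T -> j \in T -> i != j -> forall w,
  count (mt T w) P = count (mt T (flip_fun j (flip_fun i w))) P.
Proof.
move=> HK Hi Hj ne w.
have E1 := split_cnt w P Hi; have E2 := split_cnt (flip_fun i w) P Hj.
rewrite !HK // in E1 E2; lia.
Qed.

Lemma parity T K P : (forall j w, j \in T -> count (mt (T :\ j) w) P = K) ->
  forall n U, U \subset T -> #|U| = n.*2 -> forall w,
  count (mt T w) P = count (mt T (flU U w)) P.
Proof.
move=> HK; elim=> [|n IH] U HU HUn w.
  move/eqP: HUn; rewrite cards_eq0 => /eqP ->.
  by congr count; congr mt; apply/ffunP => x; rewrite ffunE inE.
have : 0 < #|U| by rewrite HUn doubleS.
case/card_gt0P => i Hi.
have : 0 < #|U :\ i| by move: HUn; rewrite (cardsD1 i) Hi doubleS; lia.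
case/card_gt0P => j /setD1P [ne Hj].
have HU' : #|U :\ i :\ j| = n.*2.
  move: HUn; rewrite (cardsD1 i U) Hi (cardsD1 j (U :\ i)) !inE ne Hj doubleS; lia.
have sU' : U :\ i :\ j \subset T.
  by apply: subset_trans HU; apply: subset_trans (subD1set _ _) (subD1set _ _).
have ne' : i != j by rewrite eq_sym.
rewrite (IH _ sU' HU') (twoflip HK (subsetP HU _ Hi) (subsetP HU _ Hj) ne').
congr count; congr mt; apply/ffunP => x; rewrite !ffunE !inE.
case: (eqVneq x j) => [Ej|nxj]; case: (eqVneq x i) => [Ei|nxi] //=.
- by move: ne; rewrite -Ej -Ei eqxx.
- by rewrite Ej Hj; case: (w j).
- by rewrite Ei Hi; case: (w i).
Qed.
End OAsec2.

Section OAsec3.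
Local Open Scope nat_scope.
Variable k : nat.
Implicit Types (P : seq {ffun 'I_k -> bool}) (S T U : {set 'I_k}) (w z : {ffun 'I_k -> bool}).

Lemma Rc_val c z x : Rperm c z x = if x == c then z c else z x (+) z c.
Proof. by rewrite permE ffunE. Qed.

Lemma OAS_R P m c : ~~ odd m -> OAS P m -> OAS (map (Rperm c) P) m.
Proof.
move=> Hm H S HS w; rewrite count_map size_map.
case: (boolP (c \in S)) => Hc.
  pose w' : {ffun 'I_k -> bool} := [ffun j => if j == c then w c else w j (+) w c].
  rewrite -(H S HS w'); congr (_ * _); apply: eq_count => z /=.
  apply/forall_inP/forall_inP => Hz x Hx.
    have := Hz c Hc; rewrite Rc_val eqxx => /eqP Ezc.
    have := Hz x Hx; rewrite Rc_val ffunE; case: (eqVneq x c) => [->|_]; rewrite ?eqxx //.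
    by rewrite Ezc; case: (z x); case: (w x); case: (w c).
  have := Hz c Hc; rewrite ffunE eqxx => /eqP Ezc.
  have := Hz x Hx; rewrite Rc_val ffunE; case: (eqVneq x c) => [->|_]; rewrite ?eqxx //.
  by rewrite Ezc; case: (z x); case: (w x); case: (w c).
set T := c |: S.
have HT : #|T| = #|S|.+1 by rewrite cardsU1 Hc.
have TS : T :\ c = S by rewrite setU1K.
pose w0 : {ffun 'I_k -> bool} := [ffun j => (j != c) && w j].
pose w1 : {ffun 'I_k -> bool} := [ffun j => if j == c then true else ~~ w j].
have Hne x : x \in S -> (x == c) = false.
  by move=> Hx; apply/negbTE; apply: contraNneq Hc => <-.
rewrite (count_split _ (fun z => z c)).
have -> : count (fun z => mt S w (Rperm c z) && z c) P = count (mt T w1) P.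
  apply: eq_count => z /=; rewrite (mtD1 _ _ (setU11 c S)) TS ffunE eqxx.
  case Ezc: (z c) => /=; rewrite ?andbF ?andbT //; apply: mt_ext => x Hx.
  by rewrite Rc_val ffunE Hne // Ezc; case: (z x); case: (w x).
have -> : count (fun z => mt S w (Rperm c z) && ~~ z c) P = count (mt T w0) P.
  apply: eq_count => z /=; rewrite (mtD1 _ _ (setU11 c S)) TS ffunE eqxx.
  case Ezc: (z c) => /=; rewrite ?andbF ?andbT //; apply: mt_ext => x Hx.
  by rewrite Rc_val ffunE Hne // Ezc; case: (z x); case: (w x).
have [lt|eq] : #|S| < m \/ #|S| = m by rewrite ltn_neqAle HS andbT; case: eqP; [right|left].
  by apply: ar; rewrite -HT; apply: H; rewrite HT.
have HK j w2 : j \in T -> count (mt (T :\ j) w2) P = size P %/ 2 ^ m.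
  move=> Hj; have Ej : #|T :\ j| = m.
    move: HT; rewrite (cardsD1 j T) Hj eq; move: (#|T :\ j|) => q /=; lia.
  by rewrite -(H (T :\ j) _ w2) ?Ej ?mulnK ?expn_gt0.
have Hev : #|S| = (#|S|./2).*2.
  by rewrite eq halfK (negbTE Hm) subn0.
rewrite (parity HK (subsetUr _ _) Hev).
have -> : count (mt T (flU S w1)) P = count (mt T (flip_fun c w0)) P.
  apply: eq_count => z; apply: mt_ext => x Hx; rewrite !ffunE.
  case: (eqVneq x c) => [->|nxc]; first by rewrite (negbTE Hc).
  move: Hx; rewrite !inE (negbTE nxc) /= => Hx; rewrite Hx /=.
  by case: (w x).
rewrite addnC -(split_cnt w0 P (setU11 c S)) TS.
rewrite -(H S HS w); congr (_ * _); apply: eq_count => z.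
by apply: mt_ext => x Hx; rewrite ffunE Hne.
Qed.
End OAsec3.

Lemma cardset_count N (Q : pred 'I_N) : #|[set i | Q i]| = count Q (enum 'I_N).
Proof. rewrite cardsE cardE /enum_mem size_filter count_filter. by apply: eq_count => i; rewrite /= !inE andbT. Qed.

Lemma OAS_GOD k m g (P : seq {ffun 'I_k -> bool}) : ~~ odd m -> g \in GOD k ->
  OAS P m -> OAS (map g P) m.
Proof.
move=> Hm Hg; move: g Hg P; apply: GOD_ind => [P HP|g h IH Hh P HP].
  by rewrite (eq_map (g := id)) ?map_id // => z; rewrite perm1.
rewrite (eq_map (g := h \o g)); last by move=> z; rewrite permM.
rewrite map_comp; have := IH P HP; move: (map g P) => Q HQ.
case/setUP: Hh => [/setUP [] |] /imsetP [x _ ->].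
- exact: OAS_cperm.
- exact: OAS_flip.
- exact: OAS_R.
Qed.

Lemma isOA_OAS N k t (Y : 'M[int]_(N, k)) : isOA2 t Y -> OAS (pts Y) t.
Proof.
case=> HY Htk HC; apply: OAS_exact => // S HS w.
rewrite size_map size_enum_ord.
pose c (j : 'I_t) : 'I_k := enum_val (cast_ord (esym HS) j).
have Hc : injective c by move=> j1 j2 /enum_val_inj /cast_ord_inj.
have := HC c Hc (fun j => sgnb (w (c j))) (fun j => pm1_sgnb _).
rewrite cardset_count /pts count_map HS => E; apply: etrans E; congr (_ * _)%N.
apply: eq_count => i /=; apply/forall_inP/forallP => H.
  move=> j; have := H (c j) (enum_valP _); rewrite toPtE mxE => /eqP <-.
  by rewrite -pm1E //; apply: (pm1mxP _ HY).
move=> x Hx; pose j := cast_ord HS (enum_rank_in Hx x).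
have Ecj : c j = x by rewrite /c cast_ordK enum_rankK_in.
by have := H j; rewrite Ecj toPtE mxE => /eqP ->; rewrite sgnbK.
Qed.

Lemma OAS_isOA N k m (X : 'M[int]_(N, k)) : pm1mx X -> (m <= k)%N -> OAS (pts X) m -> isOA2 m X.
Proof.
move=> HX Hmk HP; split => // c Hc v Hv.
pose S := [set c j | j : 'I_m].
have ES : #|S| = m by rewrite card_imset // card_ord.
pose w : {ffun 'I_k -> bool} := [ffun x => [exists j, (c j == x) && (v j == -1)]].
have Ew j : w (c j) = (v j == -1).
  rewrite ffunE; apply/existsP/idP => [[j' /andP [/eqP /Hc -> //]] | H].
  by exists j; rewrite eqxx.
have := HP S (eq_leq ES) w; rewrite size_map size_enum_ord ES => E.
rewrite cardset_count; apply: etrans E; congr (_ * _)%N.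
rewrite /pts count_map; apply: eq_count => i /=.
apply/forallP/forall_inP => H.
  move=> x /imsetP [j _ ->]; rewrite toPtE mxE Ew.
  by rewrite (eqP (H j)).
move=> j; have := H (c j) (imset_f _ (isT : j \in predT)); rewrite toPtE mxE Ew => /eqP E.
rewrite (pm1E (pm1mxP _ HX i (c j))) (pm1E (Hv j)) E.
by [].
Qed.

Local Close Scope ring_scope.

Theorem theorem6 (N k t : nat) (Y X : 'M[int]_(N, k)) :
  (1 <= t)%N -> isOA2 t Y -> pm1mx X ->
  (od_equiv X Y <->
     exists2 g, g \in GOD k & perm_eq (rows X) (rows (actOD g Y)))
  /\ (od_equiv X Y -> isOA2 (2 * t./2) X).
Proof.
move=> Ht HOA HX; have HY : pm1mx Y by case: HOA.
have Htk : t <= k by case: HOA.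
have fwd := part1_fwd HX HY.
split; first split.
- move/fwd => [h Hh Hp]; exists h => //.
  by rewrite (rows_pts HX) (rows_pts (actOD_pm1 h Y)) pts_act; apply: perm_map.
- by case=> g Hg Hp; apply: part1_back HY Hg Hp.
move/fwd => [h Hh Hp].
have Hle : 2 * t./2 <= t by rewrite mul2n -[leqRHS](odd_double_half t) leq_addl.
apply: OAS_isOA => //; first exact: leq_trans Hle Htk.
apply: (OAS_perm (P := map h (pts Y))); first by rewrite perm_sym.
apply: OAS_GOD Hh _; first by rewrite mul2n odd_double.
exact: OAS_mono Hle (isOA_OAS HOA).
Qed.
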